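(* Let $X\in\mathbb{R}^{n\times r}$ have linearly independent columns and let $A\in\mathbb{R}^{r\times r}$ be skewsymmetric. Let $Y$ be the random subset of $\{1,\dots,n\}$ with law $$\mathbb{P}(Y=\mathtt{C})=\frac{1}{\det(A+X^\top X)}\det\begin{bmatrix}0_{|\mathtt{C}|}&X_{\mathtt{C}:}\\-(X_{\mathtt{C}:})^\top&A\end{bmatrix}.$$ Then for every $T\subseteq\{1,\dots,n\}$, $$\mathbb{P}(T\subseteq Y)=\det\big(K_{TT}\big),\qquad K=X(A+X^\top X)^{-1}X^\top,$$ where $K_{TT}$ is the principal submatrix of $K$ indexed by $T$.
   Context: $X_{\mathtt{C}:}$ is the submatrix of $X$ with rows indexed by $\mathtt{C}$ in increasing order. $0_m$ is the $m\times m$ zero matrix. For $\mathtt{C}=\emptyset$ the block matrix is $A$. The determinant of the empty matrix is $1$. *)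

(* Defs.v *)
From mathcomp Require Import all_boot all_order all_algebra.
Set Implicit Arguments. Unset Strict Implicit. Unset Printing Implicit Defensive.
Import Order.TTheory GRing.Theory Num.Theory.
Local Open Scope ring_scope.

(* rowsubC X C = X_{C:}: rows of X indexed by C in increasing order
   (enum C lists the elements of C : {set 'I_n} in increasing order). *)
Definition rowsubC (R : Type) (n r : nat) (X : 'M[R]_(n, r)) (C : {set 'I_n})
  : 'M[R]_(#|C|, r) := \matrix_(i < #|C|, j < r) X (enum_val i) j.

Definition psubmx (R : Type) (n : nat) (K : 'M[R]_n) (T : {set 'I_n})
  : 'M[R]_#|T| := \matrix_(i < #|T|, j < #|T|) K (enum_val i) (enum_val j).

Definition blockC (R : pzRingType) (n r : nat) (X : 'M[R]_(n, r)) (A : 'M[R]_r)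
  (C : {set 'I_n}) : 'M[R]_(#|C| + r) :=
  block_mx (0 : 'M[R]_#|C|) (rowsubC X C) (- (rowsubC X C)^T) A.

Definition probY (R : fieldType) (n r : nat) (X : 'M[R]_(n, r)) (A : 'M[R]_r)
  (C : {set 'I_n}) : R :=
  \det (blockC X A C) / \det (A + X^T *m X).

(* Main.v *)
Require Import Defs.
From mathcomp Require Import all_boot all_order all_algebra all_fingroup.
Set Implicit Arguments. Unset Strict Implicit. Unset Printing Implicit Defensive.
Import Order.TTheory GRing.Theory Num.Theory.
Local Open Scope ring_scope.

Lemma det_reindex (R : comNzRingType) p q (h : 'I_q -> 'I_p) (M : 'M[R]_p) :
  injective h -> q = p -> \det (\matrix_(i, j) M (h i) (h j)) = \det M.
Proof.
move=> hinj e; subst q.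
pose s := perm hinj.
have -> : \matrix_(i, j) M (h i) (h j) = row_perm s (col_perm s M).
  by apply/matrixP => i j; rewrite !mxE !permE.
rewrite row_permE col_permE !det_mulmx !det_perm odd_permV mulrCA.
by rewrite -expr2 sqrr_sign mulr1.
Qed.
Definition phiT n (T : {set 'I_n}) (k : 'I_(#|T| + #|~: T|)) : 'I_n :=
  match split k with inl a => enum_val a | inr c => enum_val c end.

Lemma phiT_inj n (T : {set 'I_n}) : injective (@phiT n T).
Proof.
move=> k k'; rewrite /phiT.
case: (split_ordP k) => a ->; case: (split_ordP k') => b -> e.
- by rewrite (enum_val_inj e).
- by have := enum_valP a; rewrite e; have := enum_valP b; rewrite inE => /negbTE ->.
- by have := enum_valP a; rewrite e; have := enum_valP b; rewrite inE => -> .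
- by rewrite (enum_val_inj e).
Qed.

Definition maskc (R : pzRingType) n (K : 'M[R]_n) (T : {set 'I_n}) : 'M[R]_n :=
  \matrix_(i, j) if j \in T then K i j else (i == j)%:R.

Lemma det_maskc (R : comNzRingType) n (K : 'M[R]_n) (T : {set 'I_n}) :
  \det (maskc K T) = \det (psubmx K T).
Proof.
have e : (#|T| + #|~: T| = n)%N by rewrite cardsC card_ord.
rewrite -(det_reindex (maskc K T) (@phiT_inj n T) e).
have -> : \matrix_(i, j) maskc K T (phiT i) (phiT j) =
   block_mx (psubmx K T) 0 (\matrix_(i < #|~:T|, j < #|T|) K (enum_val i) (enum_val j)) 1%:M.
  apply/matrixP => i j; rewrite mxE /maskc mxE (inj_eq (@phiT_inj n T)).
  rewrite /phiT.
  case: (split_ordP i) => a ->; case: (split_ordP j) => b ->;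
    rewrite ?block_mxEul ?block_mxEur ?block_mxEdl ?block_mxEdr ?mxE
       ?eq_lshift ?eq_rshift ?eq_lrshift ?eq_rlshift.
  - by rewrite enum_valP.
  - by have := enum_valP b; rewrite inE => /negbTE ->.
  - by rewrite enum_valP.
  - by have := enum_valP b; rewrite inE => /negbTE ->.
by rewrite det_lblock det1 mulr1.
Qed.

Lemma split_lshift m k (i : 'I_m) : split (lshift k i) = inl i.
Proof. exact: (unsplitK (inl i)). Qed.
Lemma split_rshift m k (i : 'I_k) : split (rshift m i) = inr i.
Proof. exact: (unsplitK (inr i)). Qed.

Definition inS n r (C : {set 'I_n}) (k : 'I_(n + r)) : bool :=
  if split k is inl i then i \in C else true.

Definition EC (R : pzRingType) n r (C : {set 'I_n}) (M : 'M[R]_(n + r)) : 'M[R]_(n + r) :=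
  \matrix_(i, j) if inS C i && inS C j then M i j else (i == j)%:R.

Definition phiC n r (C : {set 'I_n}) (k : 'I_((#|C| + r) + #|~: C|)) : 'I_(n + r) :=
  match split k with
  | inl k1 => match split k1 with inl a => lshift r (enum_val a) | inr b => rshift n b end
  | inr c => lshift r (enum_val c) end.

Lemma enum_val_C_neq n (C : {set 'I_n}) (x : 'I_#|C|) (y : 'I_#|~: C|) :
  (enum_val x == enum_val y) = false.
Proof.
apply/negbTE/eqP => e; have := enum_valP y; rewrite -e inE.
by have := enum_valP x => ->.
Qed.

Lemma enum_val_notin n (C : {set 'I_n}) (y : 'I_#|~: C|) : (enum_val y \in C) = false.
Proof. by have := enum_valP y; rewrite inE => /negbTE. Qed.

Lemma phiC_inj n r (C : {set 'I_n}) : injective (@phiC n r C).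
Proof.
move=> k k'; rewrite /phiC.
case: (split_ordP k) => a ->; case: (split_ordP k') => b ->;
  try (case: (split_ordP a) => a1 ->); try (case: (split_ordP b) => b1 ->);
  move=> /eqP; rewrite ?eq_lshift ?eq_rshift ?eq_lrshift ?eq_rlshift
    ?enum_val_C_neq 1?eq_sym ?enum_val_C_neq //.
all: first [ by move=> /eqP -> | by move=> /eqP /enum_val_inj -> ].
Qed.

Lemma det_EC (R : comNzRingType) n r (X : 'M[R]_(n, r)) (A : 'M[R]_r) (C : {set 'I_n}) :
  \det (EC C (block_mx 0 X (- X^T) A)) = \det (blockC X A C).
Proof.
have e : ((#|C| + r) + #|~: C| = n + r)%N by rewrite addnAC cardsC card_ord.
rewrite -(det_reindex _ (@phiC_inj n r C) e).
have -> : \matrix_(i, j) EC C (block_mx 0 X (- X^T) A) (phiC i) (phiC j) =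
   block_mx (blockC X A C) 0 0 1%:M.
  apply/matrixP => i j; rewrite mxE /EC mxE (inj_eq (@phiC_inj n r C)).
  rewrite /phiC /blockC.
  case: (split_ordP i) => a ->; case: (split_ordP j) => b ->;
    try (case: (split_ordP a) => a1 ->); try (case: (split_ordP b) => b1 ->);
    rewrite ?block_mxEul ?block_mxEur ?block_mxEdl ?block_mxEdr /inS ?split_lshift ?split_rshift;
    rewrite ?block_mxEul ?block_mxEur ?block_mxEdl ?block_mxEdr ?mxE
       ?eq_lshift ?eq_rshift ?eq_lrshift ?eq_rlshift.
  all: rewrite ?enum_valP ?eq_refl //.
  all: rewrite ?enum_valP ?enum_val_C_neq ?(negbTE (enum_valP _)) ?andbF //=.
  all: rewrite ?enum_val_notin ?andbT ?andbF ?if_same //.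
by rewrite det_ublock det1 mulr1.
Qed.

Lemma EC_pointwise (R : comNzRingType) n r (d : 'I_n -> R) (M : 'M[R]_(n + r))
  (C : {set 'I_n}) (s : 'S_(n + r)) :
  (\prod_i (if i \in C then M (lshift r i) (s (lshift r i))
            else d i * (lshift r i == s (lshift r i))%:R))
   * \prod_j M (rshift n j) (s (rshift n j))
  = (\prod_(i in ~: C) d i) * \prod_k EC C M k (s k).
Proof.
rewrite (bigID (fun i => i \in C)) /=.
rewrite (eq_bigr (fun i => M (lshift r i) (s (lshift r i)))); last by move=> i ->.
rewrite (eq_bigr (P := fun i => i \notin C) (fun i => d i * (lshift r i == s (lshift r i))%:R)); last by move=> i /negbTE ->.
rewrite big_split /=.
have -> : \prod_(i in ~: C) d i = \prod_(i | i \notin C) d i.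
  by apply: eq_bigl => i; rewrite inE.
case: (boolP [forall i, (i \notin C) ==> (s (lshift r i) == lshift r i)]) => hall.
- have hall' : forall i, i \notin C -> s (lshift r i) = lshift r i.
    by move=> i hi; move/forallP: hall => /(_ i); rewrite hi => /eqP.
  have clos : forall k, inS C k -> inS C (s k).
    move=> k hk; rewrite /inS; case: (split_ordP (s k)) => // i ei.
    apply/negPn/negP => hi.
    have : s (lshift r i) = s k by rewrite hall' // ei.
    move=> /perm_inj ek.
    by move: hk; rewrite -ek /inS split_lshift (negbTE hi).
  have hEC : forall k, inS C k -> EC C M k (s k) = M k (s k).
    by move=> k hk; rewrite /EC mxE hk clos.
  have e1 : \prod_(k < n + r) EC C M k (s k) =
      \prod_(i in C) M (lshift r i) (s (lshift r i)) * \prod_j M (rshift n j) (s (rshift n j)).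
    rewrite big_split_ord (bigID (fun i => i \in C)) /=.
    rewrite [X in _ * X * _]big1 ?mulr1; last first.
      by move=> i hi; rewrite /EC mxE /inS split_lshift (negbTE hi) /= hall' // eqxx.
    congr (_ * _); apply: eq_bigr => i hi.
      by rewrite hEC // /inS split_lshift.
    by rewrite hEC // /inS split_rshift.
  have e2 : \prod_(i | i \notin C) (lshift r i == s (lshift r i))%:R = 1 :> R.
    by apply: big1 => i hi; rewrite hall' // eqxx.
  by rewrite e1 e2 mulr1 -mulrA mulrCA.
- move/forallPn: hall => [i]; rewrite negb_imply => /andP [hiC hsi].
  have z1 : \prod_(i | i \notin C) (lshift r i == s (lshift r i))%:R = 0 :> R.
    by rewrite (bigD1 i) //= eq_sym (negbTE hsi) mul0r.
  have z2 : \prod_(k < n + r) EC C M k (s k) = 0.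
    rewrite (bigD1 (lshift r i)) //= /EC mxE /inS split_lshift (negbTE hiC) /=.
    by rewrite eq_sym (negbTE hsi) mul0r.
  by rewrite z1 z2 !mulr0 mul0r.
Qed.

Lemma det_expand (R : comNzRingType) n r (d : 'I_n -> R) (M N : 'M[R]_(n + r)) :
  (forall i j, N (lshift r i) j = M (lshift r i) j + d i * (lshift r i == j)%:R) ->
  (forall i j, N (rshift n i) j = M (rshift n i) j) ->
  \det N = \sum_(C : {set 'I_n}) (\prod_(i in ~: C) d i) * \det (EC C M).
Proof.
move=> hl hr.
rewrite /determinant.
transitivity (\sum_(s : 'S_(n + r)) (-1) ^+ s *
  (\prod_i (M (lshift r i) (s (lshift r i)) + d i * (lshift r i == s (lshift r i))%:R)
   * \prod_j M (rshift n j) (s (rshift n j)))).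
  apply: eq_bigr => s _; rewrite big_split_ord /=; congr (_ * (_ * _)).
    by apply: eq_bigr => i _; rewrite hl.
  by apply: eq_bigr => j _; rewrite hr.
transitivity (\sum_(s : 'S_(n + r)) \sum_(C : {set 'I_n}) (-1) ^+ s *
   ((\prod_i (if i \in C then M (lshift r i) (s (lshift r i))
            else d i * (lshift r i == s (lshift r i))%:R))
   * \prod_j M (rshift n j) (s (rshift n j)))).
  apply: eq_bigr => s _; rewrite bigA_distr big_distrl /= big_distrr /=.
  by apply: eq_bigr => C _.
rewrite exchange_big /=; apply: eq_bigr => C _.
rewrite big_distrr /=; apply: eq_bigr => s _.
by rewrite EC_pointwise mulrCA.
Qed.
Lemma zid (V : zmodType) (a b c : V) : - c = - (c - (a + b) + b) - a.
Proof. by rewrite (opprD a b) addrA addrNK opprB addrC addKr. Qed.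

Lemma det_schur (R : fieldType) n r (X : 'M[R]_(n, r)) (A : 'M[R]_r) (P : 'M[R]_n) :
  (A + X^T *m X) \in unitmx ->
  \det (block_mx (1%:M - P) X (- X^T) A) =
  \det (A + X^T *m X) * \det (1%:M - P + X *m invmx (A + X^T *m X) *m X^T *m P).
Proof.
set B := A + X^T *m X => hB.
set Y := invmx B *m X^T *m P.
have hBY : B *m Y = X^T *m P by rewrite /Y !mulmxA mulmxV // mul1mx.
have hM1 : block_mx 1%:M X (- X^T) A = block_mx 1%:M 0 (- X^T) 1%:M *m block_mx 1%:M X 0 B.
  rewrite mulmx_block !mul1mx ?mulmx1 ?mul0mx ?mulmx0 ?addr0 ?add0r.
  by rewrite mulNmx /B addrCA addNr addr0.
have hK : X *m invmx B *m X^T *m P = X *m Y by rewrite /Y !mulmxA.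
rewrite hK.
have hN : block_mx (1%:M - P) X (- X^T) A =
   block_mx 1%:M X (- X^T) A *m block_mx (1%:M - P + X *m Y) 0 (- Y) 1%:M.
  rewrite mulmx_block ?mul1mx ?mulmx1 ?mulmx0 ?addr0 ?add0r mulmxN addrK.
  congr block_mx.
  rewrite !mulNmx mulmxDr mulmxBr mulmx1 mulmxN mulmxA.
  by rewrite -hBY /B mulmxDl; apply: zid.
rewrite hN hM1 !det_mulmx det_lblock det_ublock det_lblock !det1 !mul1r mulr1.
done.
Qed.
Lemma B_unit (R : realFieldType) n r (X : 'M[R]_(n, r)) (A : 'M[R]_r) :
  \rank X = r -> A^T = - A -> (A + X^T *m X) \in unitmx.
Proof.
move=> hX hA; rewrite unitmxE unitfE; apply/negP => /det0P [v hv0 hvB].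
have hs : v *m A *m v^T + v *m X^T *m (v *m X^T)^T = 0.
  have := congr1 (mulmx ^~ v^T) hvB; rewrite /= mul0mx mulmxDr mulmxDl => <-.
  by rewrite trmx_mul trmxK !mulmxA.
have ha : v *m A *m v^T = 0.
  apply/matrixP => i j; rewrite !ord1 [RHS]mxE.
  set x := (v *m A *m v^T) 0 0.
  have e : (v *m A *m v^T)^T = - (v *m A *m v^T).
    by rewrite !trmx_mul trmxK hA mulNmx mulmxN mulmxA.
  have hx : x = - x.
    have := congr1 (fun M : 'M[R]_1 => M 0 0) e; rewrite /= !mxE.
    by rewrite /x mxE.
  have : x *+ 2 == 0 by rewrite mulr2n {1}hx addNr.
  by rewrite mulrn_eq0 /= => /eqP.
rewrite ha add0r in hs.
move: hs; move Hw: (v *m X^T) => w hs.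
have hw : w = 0.
  apply/rowP => j; rewrite [RHS]mxE.
  have := congr1 (fun M : 'M[R]_1 => M 0 0) hs; rewrite /= [RHS]mxE mxE => hsum.
  have hle : forall k, true -> 0 <= w 0 k * w^T k 0.
    by move=> k _; rewrite [w^T k 0]mxE -expr2 sqr_ge0.
  have := @psumr_eq0P _ _ _ _ hle hsum j isT; rewrite [w^T j 0]mxE -expr2 => /eqP.
  by rewrite sqrf_eq0 => /eqP.
have hfree : row_free X^T by rewrite /row_free mxrank_tr hX.
have : v *m X^T = 0 *m X^T by rewrite mul0mx Hw hw.
by move/(row_free_inj hfree) => /eqP; rewrite (negbTE hv0).
Qed.

Theorem mainTheorem7 (R : realFieldType) (n r : nat)
  (X : 'M[R]_(n, r)) (A : 'M[R]_r)
  (hX : \rank X = r) (hA : A^T = - A) (T : {set 'I_n}) :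
  \sum_(C : {set 'I_n} | T \subset C) probY X A C
  = \det (psubmx (X *m invmx (A + X^T *m X) *m X^T) T).
Proof.
have hB := B_unit hX hA.
set B := A + X^T *m X in hB *.
have hdetB : \det B != 0 by rewrite -unitfE -unitmxE.
set K := X *m invmx B *m X^T.
pose d : 'I_n -> R := fun i => (i \notin T)%:R.
pose P : 'M[R]_n := diag_mx (\row_j (j \in T)%:R).
pose M0 : 'M[R]_(n + r) := block_mx 0 X (- X^T) A.
pose N : 'M[R]_(n + r) := block_mx (1%:M - P) X (- X^T) A.
have hexp := @det_expand R n r d M0 N.
have step1 : \det N = \sum_(C : {set 'I_n}) (\prod_(i in ~: C) d i) * \det (EC C M0).
  apply: hexp => i j.
    rewrite /N /M0; case: (split_ordP j) => b ->;
      rewrite ?block_mxEul ?block_mxEur ?eq_lshift ?eq_lrshift.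
      rewrite /P /d !mxE; case: (eqVneq i b) => [->|hib] /=.
        by case: (b \in T); rewrite /= ?mulr1 ?mulr0 ?subr0 ?subrr ?add0r.
      by rewrite ?mulr0 ?mulr0n subr0 add0r.
    by rewrite mulr0 addr0.
  rewrite /N /M0; case: (split_ordP j) => b ->;
    by rewrite ?block_mxEdl ?block_mxEdr.
have step2 : \sum_(C : {set 'I_n}) (\prod_(i in ~: C) d i) * \det (EC C M0)
   = \sum_(C : {set 'I_n} | T \subset C) \det (blockC X A C).
  rewrite [RHS]big_mkcond; apply: eq_bigr => C _; rewrite det_EC.
  case: (boolP (T \subset C)) => hTC.
    rewrite big1 ?mul1r // => i; rewrite inE => hiC.
    rewrite /d; have -> : i \notin T by apply: contra hiC; apply: (subsetP hTC).
    done.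
  move/subsetPn: hTC => [i hiT hiC].
  by rewrite (bigD1 i) ?inE //= /d hiT mul0r mul0r.
have step3 : \det N = \det B * \det (1%:M - P + K *m P) by rewrite /N det_schur.
have step4 : 1%:M - P + K *m P = maskc K T.
  apply/matrixP => i j; rewrite /P mul_mx_diag !mxE.
  case: (eqVneq i j) => [<-|hij] /=.
    by case: (boolP (i \in T)) => hi; rewrite /= ?mulr1 ?mulr0 ?subrr ?add0r ?subr0 ?addr0.
  by rewrite subr0; case: (j \in T); rewrite /= ?mulr1 ?mulr0 ?add0r ?addr0.
rewrite /probY -mulr_suml -step2 -step1 step3 step4 det_maskc.
by rewrite mulrC mulrA mulVf // mul1r.
Qed.
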